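(* Let $(Q,\cdot)$ be a quadratical quasigroup of order $9$. Then there exist distinct $a,b\in Q$ such that $Q=\{aba\}\cup H1\cup H2$, i.e. $Q=\{aba,\ a,\ ab,\ ba,\ b,\ a\cdot ab,\ ab\cdot b,\ ba\cdot a,\ b\cdot ba\}$.
   Context: A quadratical quasigroup is a quasigroup $(Q,\cdot)$ satisfying $xy\cdot x=zx\cdot yz$ for all $x,y,z\in Q$; equivalently, a groupoid satisfying $x\cdot x=x$, $yx\cdot xy=x$ and $xy\cdot zw=xz\cdot yw$. For distinct $a,b$, $aba$ denotes $ab\cdot a$, $H1=\{a,ab,ba,b\}$ and $H2=\{a\cdot ab,\ ab\cdot b,\ ba\cdot a,\ b\cdot ba\}$. *)

(* Defs.v *)
From mathcomp Require Import all_boot.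
Set Implicit Arguments. Unset Strict Implicit. Unset Printing Implicit Defensive.

Definition quasigroup (Q : Type) (mul : Q -> Q -> Q) : Prop :=
  (forall a, bijective (mul a)) /\ (forall a, bijective (fun y => mul y a)).

Definition quadratical (Q : Type) (mul : Q -> Q -> Q) : Prop :=
  quasigroup mul /\
  forall x y z, mul (mul x y) x = mul (mul z x) (mul y z).

Definition H1 (Q : finType) (mul : Q -> Q -> Q) (a b : Q) : {set Q} :=
  [set a; mul a b; mul b a; b].

Definition H2 (Q : finType) (mul : Q -> Q -> Q) (a b : Q) : {set Q} :=
  [set mul a (mul a b); mul (mul a b) b; mul (mul b a) a; mul b (mul b a)].

Definition aba (Q : Type) (mul : Q -> Q -> Q) (a b : Q) : Q := mul (mul a b) a.

(* Main.v *)
Require Import Defs.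
From mathcomp Require Import all_boot zify.




Lemma qcL {Q : Type} {mul : Q -> Q -> Q} : quadratical mul ->
  forall a x y, mul a x = mul a y -> x = y.
Proof. by case=> [[HL _] _] a; apply: bij_inj (HL a). Qed.

Lemma qcR {Q : Type} {mul : Q -> Q -> Q} : quadratical mul ->
  forall a x y, mul x a = mul y a -> x = y.
Proof. by case=> [[_ HR] _] a x y; exact: (bij_inj (HR a)). Qed.

Lemma qsL {Q : Type} {mul : Q -> Q -> Q} : quadratical mul ->
  forall a c, exists y, mul a y = c.
Proof. by case=> [[HL _] _] a c; case: (HL a) => g _ K; exists (g c). Qed.

Lemma qsR {Q : Type} {mul : Q -> Q -> Q} : quadratical mul ->
  forall a c, exists y, mul y a = c.
Proof. by case=> [[_ HR] _] a c; case: (HR a) => g _ K; exists (g c). Qed.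

Lemma qQ {Q : Type} {mul : Q -> Q -> Q} : quadratical mul ->
  forall x y z, mul (mul x y) x = mul (mul z x) (mul y z).
Proof. by case. Qed.

Lemma qid {Q : Type} {mul : Q -> Q -> Q} : quadratical mul ->
  forall x, mul x x = x.
Proof. move=> H x; symmetry; exact: (qcL H _ _ _ (qQ H x x x)). Qed.

Lemma qK {Q : Type} {mul : Q -> Q -> Q} : quadratical mul ->
  forall x y, mul (mul y x) (mul x y) = x.
Proof. by move=> H x y; rewrite -(qQ H x x y) !(qid H). Qed.

Lemma qE {Q : Type} {mul : Q -> Q -> Q} : quadratical mul ->
  forall x y, mul (mul x y) x = mul x (mul y x).
Proof. by move=> H x y; rewrite (qQ H x y x) (qid H). Qed.

Lemma qS {Q : Type} {mul : Q -> Q -> Q} : quadratical mul ->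
  forall x y, mul (mul x y) x = mul (mul y x) y.
Proof. by move=> H x y; rewrite (qQ H x y y) (qid H). Qed.

Lemma qY {Q : Type} {mul : Q -> Q -> Q} : quadratical mul ->
  forall x y, mul y (mul x y) = mul (mul x y) x.
Proof. by move=> H x y; rewrite -(qE H y x) (qS H). Qed.

Lemma qLD {Q : Type} {mul : Q -> Q -> Q} : quadratical mul ->
  forall x y z, mul x (mul y z) = mul (mul x y) (mul x z).
Proof.
move=> H x y z; case: (qsL H z x) => x' Hx'.
have Exz : mul x z = mul x' x by rewrite -Hx' -(qY H z x').
rewrite Exz -(qQ H y x' x) -(qS H x' y) {1}(qQ H x' y z) Hx' //.
Qed.

Lemma qRD {Q : Type} {mul : Q -> Q -> Q} : quadratical mul ->
  forall x y z, mul (mul x y) z = mul (mul x z) (mul y z).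
Proof.
move=> H x y z; case: (qsR H x z) => y' Hy'.
have Exz : mul x z = mul z y' by rewrite -Hy' (qY H).
rewrite Exz -(qQ H y' y z) -(qS H y y') -Hy' -(qQ H y y' x) //.
Qed.

Lemma qcomm {Q : Type} {mul : Q -> Q -> Q} : quadratical mul ->
  forall x y, mul x y = mul y x -> x = y.
Proof.
move=> H x y E; have E2 := qK H x y; rewrite -E (qid H) in E2.
by apply: (qcL H x); rewrite E2 (qid H).
Qed.

Lemma qmirror {Q : Type} {mul : Q -> Q -> Q} : quadratical mul ->
  quadratical (fun x y => mul y x).
Proof.
move=> H; case: (H) => [[HL HR] _]; split; first by split.
move=> x y z /=; by rewrite -(qQ H y x z) (qY H).
Qed.

Lemma pig {Q : finType} {mul : Q -> Q -> Q} : quadratical mul -> #|Q| = 9 ->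
  forall S : {set Q}, (forall x y, x \in S -> y \in S -> mul x y \in S) ->
  5 <= #|S| -> forall x, x \in S.
Proof.
move=> H H9 S cl S5 t; apply/negPn/negP => tS.
have sub : [set mul t z | z in S] \subset ~: S.
  apply/subsetP => _ /imsetP [z zS ->]; rewrite inE; apply/negP => tzS.
  pose g := fun w => mul w z.
  have gi : injective g by move=> w1 w2; exact: (qcR H).
  have /eqP E : [set g w | w in S] == S.
    rewrite eqEcard card_imset //= leqnn andbT.
    by apply/subsetP => _ /imsetP [w wS ->]; exact: cl.
  move: tzS; rewrite -E => /imsetP [w wS] /(qcR H) Ew.
  by move: tS; rewrite Ew wS.
have := subset_leq_card sub; rewrite card_imset; last by move=> ? ?; exact: (qcL H).
have := cardsC S; rewrite H9 => C; lia.
Qed.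

Lemma nL1 {Q : Type} {mul : Q -> Q -> Q} : quadratical mul ->
  forall x y, x <> y -> x <> mul x y.
Proof. move=> H x y xy E; apply: xy; apply: (qcL H x); by rewrite -E (qid H). Qed.

Lemma nL2 {Q : Type} {mul : Q -> Q -> Q} : quadratical mul ->
  forall x y, x <> y -> y <> mul x y.
Proof. move=> H x y xy E; apply: xy; apply: (qcR H y); by rewrite -E (qid H). Qed.

Lemma ncomm {Q : Type} {mul : Q -> Q -> Q} : quadratical mul ->
  forall x y, x <> y -> mul x y <> mul y x.
Proof. by move=> H x y xy E; apply: xy; apply: qcomm H _ _ E. Qed.

Lemma nrA {Q : Type} {mul : Q -> Q -> Q} : quadratical mul ->
  forall x y, x <> y -> mul (mul x y) x <> x.
Proof.
move=> H x y xy E; apply: (nL1 H _ _ xy); symmetry; apply: (qcR H x).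
by rewrite E (qid H).
Qed.

Lemma nrB {Q : Type} {mul : Q -> Q -> Q} : quadratical mul ->
  forall x y, x <> y -> mul (mul x y) x <> y.
Proof.
move=> H x y xy E; rewrite (qS H) in E.
have yx : y <> x by move=> e; apply: xy.
apply: (nL1 H _ _ yx); symmetry; apply: (qcR H y); by rewrite E (qid H).
Qed.

Lemma nrP {Q : Type} {mul : Q -> Q -> Q} : quadratical mul ->
  forall x y, x <> y -> mul (mul x y) x <> mul x y.
Proof.
move=> H x y xy E; apply: (nL1 H _ _ xy); apply: (qcL H (mul x y)).
by rewrite E (qid H).
Qed.

Lemma nrQ {Q : Type} {mul : Q -> Q -> Q} : quadratical mul ->
  forall x y, x <> y -> mul (mul x y) x <> mul y x.
Proof.
move=> H x y xy E; rewrite (qS H) in E.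
have yx : y <> x by move=> e; apply: xy.
apply: (nL1 H _ _ yx); apply: (qcL H (mul y x)); by rewrite E (qid H).
Qed.

Ltac neqs := repeat (apply/andP; split); try done;
  try (apply/eqP; done); try (rewrite eq_sym; done); try (rewrite eq_sym; apply/eqP; done).

Lemma D5 {Q : finType} {mul : Q -> Q -> Q} : quadratical mul ->
  forall a b, a != b -> uniq [:: a; b; mul a b; mul b a; mul (mul a b) a].
Proof.
move=> H a b /eqP ab.
have ba : b <> a by move=> e; apply: ab.
have h1 := nL1 H _ _ ab. have h2 := nL2 H _ _ ab. have h3 := nL1 H _ _ ba. have h4 := nL2 H _ _ ba.
have h5 := ncomm H _ _ ab. have h6 := nrA H _ _ ab. have h7 := nrB H _ _ ab. have h8 := nrP H _ _ ab.
have h9 := nrQ H _ _ ab.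
rewrite /= !inE !negb_or.
neqs.
Qed.

Lemma EQl {Q : finType} {mul : Q -> Q -> Q} : quadratical mul -> #|Q| = 9 ->
  forall (f g : Q -> Q) a b,
  (forall x y, f (mul x y) = mul (f x) (f y)) ->
  (forall x y, g (mul x y) = mul (g x) (g y)) ->
  f a = g a -> f b = g b -> a != b -> forall x, f x = g x.
Proof.
move=> H H9 f g a b fm gm fa fb ab x.
pose S := [set x | f x == g x].
have cl : forall x y, x \in S -> y \in S -> mul x y \in S.
  by move=> u v; rewrite !inE => /eqP fu /eqP fv; rewrite fm gm fu fv.
have aS : a \in S by rewrite inE fa.
have bS : b \in S by rewrite inE fb.
have S5 : 5 <= #|S|.
  rewrite -[5]/(size [:: a; b; mul a b; mul b a; mul (mul a b) a]).
  rewrite -(card_uniqP (D5 H _ _ ab)); apply: subset_leq_card; apply/subsetP.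
  apply/allP; rewrite /= aS bS !cl //.
by have := pig H H9 _ cl S5 x; rewrite inE => /eqP.
Qed.

Lemma LScontra {Q : finType} {mul : Q -> Q -> Q} : quadratical mul -> #|Q| = 9 ->
  (forall c z, mul c (mul c z) = z) -> False.
Proof.
move=> H H9 LS.
have : 1 < #|Q| by rewrite H9.
case/card_gt1P => a [b [_ _ ab]].
have LSc : forall x y z, mul (mul x y) z = mul x (mul y (mul x z)).
  by move=> x y z; rewrite (qLD H x y (mul x z)) LS.
pose S := [set x | x \in [:: a; b; mul a b; mul b a; mul (mul a b) a]].
have mem : forall y, y \in [:: a; b; mul a b; mul b a; mul (mul a b) a] -> y \in S.
  by move=> y yin; rewrite inE.
have sa : forall z, z \in S -> mul a z \in S.
  move=> z; rewrite inE !in_cons in_nil orbF => /orP[/eqP->|/orP[/eqP->|/orP[/eqP->|/orP[/eqP->|/eqP->]]]]; apply: mem.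
  - by rewrite (qid H) !inE eqxx.
  - by rewrite !inE eqxx ?orbT.
  - by rewrite LS !inE eqxx ?orbT.
  - by rewrite -(qE H a b) !inE eqxx ?orbT.
  - have -> : mul a (mul (mul a b) a) = mul b a by rewrite (qE H a b) LS.
    by rewrite !inE eqxx ?orbT.
have sb : forall z, z \in S -> mul b z \in S.
  move=> z; rewrite inE !in_cons in_nil orbF => /orP[/eqP->|/orP[/eqP->|/orP[/eqP->|/orP[/eqP->|/eqP->]]]]; apply: mem.
  - by rewrite !inE eqxx ?orbT.
  - by rewrite (qid H) !inE eqxx ?orbT.
  - by rewrite (qY H a b) !inE eqxx ?orbT.
  - by rewrite LS !inE eqxx ?orbT.
  - have -> : mul b (mul (mul a b) a) = mul a b by rewrite -(qY H a b) LS.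
    by rewrite !inE eqxx ?orbT.
have sp : forall z, z \in S -> mul (mul a b) z \in S.
  by move=> z zS; rewrite LSc; apply: (sa); apply: (sb); apply: (sa).
have cl : forall x y, x \in S -> y \in S -> mul x y \in S.
  move=> x z; rewrite inE !in_cons in_nil orbF => /orP[/eqP->|/orP[/eqP->|/orP[/eqP->|/orP[/eqP->|/eqP->]]]] zS.
  - exact: sa.
  - exact: sb.
  - exact: sp.
  - by rewrite LSc; apply: (sb); apply: (sa); apply: (sb).
  - by rewrite LSc; apply: (sp); apply: (sa); apply: (sp).
have S5 : #|S| = 5 by rewrite cardsE (card_uniqP (D5 H _ _ ab)).
have : #|Q| <= #|S|.
  rewrite -cardsT; apply: subset_leq_card; apply/subsetP => x _.
  apply: (pig H H9 _ cl); by rewrite S5.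
by rewrite S5 H9.
Qed.

Lemma conjLS {Q : Type} {mul : Q -> Q -> Q} : quadratical mul ->
  forall a, (forall x, mul a (mul a x) = x) -> forall c z, mul c (mul c z) = z.
Proof.
move=> H a La c z; case: (qsL H a c) => y <-; case: (qsR H y z) => x <-.
by rewrite -(qRD H a x y) -(qRD H a (mul a x) y) La.
Qed.

Lemma conjG {Q : Type} {mul : Q -> Q -> Q} : quadratical mul ->
  forall a, (forall x, mul x a = mul a (mul a x)) ->
  forall c z, mul z c = mul c (mul c z).
Proof.
move=> H a Ga c z; case: (qsL H a c) => y <-; case: (qsR H y z) => x <-.
by rewrite -(qRD H x a y) (Ga x) -(qRD H a x y) -(qRD H a (mul a x) y).
Qed.

Lemma G3contra {Q : finType} {mul : Q -> Q -> Q} : quadratical mul -> #|Q| = 9 ->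
  forall a, (forall x, mul x a = mul a (mul a x)) -> False.
Proof.
move=> H H9 a Ga; have G := conjG H _ Ga.
have RS : forall x y, mul (mul x y) y = x.
  move=> x y; have := qK H x y; rewrite (G x y) -(qLD H x (mul x y) y) => E.
  by apply: (qcL H x); rewrite E (qid H).
by apply: (LScontra (qmirror H) H9) => c z /=; rewrite RS.
Qed.

Lemma N1 {Q : finType} {mul : Q -> Q -> Q} : quadratical mul -> #|Q| = 9 ->
  forall a b, a != b -> mul a (mul a b) != b.
Proof.
move=> H H9 a b ab; apply/eqP => E.
have all : forall x, id x = mul a (mul a x).
  apply: (EQl H H9 id (fun x => mul a (mul a x)) a b _ _ _ _ ab).
  - by [].
  - by move=> x y /=; rewrite (qLD H a x y) (qLD H a (mul a x) (mul a y)).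
  - by rewrite !(qid H).
  - by rewrite E.
apply: (LScontra H H9); apply: (conjLS H a) => x.
by rewrite -all.
Qed.

Lemma N2 {Q : finType} {mul : Q -> Q -> Q} : quadratical mul -> #|Q| = 9 ->
  forall a b, a != b -> mul b a != mul a (mul a b).
Proof.
move=> H H9 a b ab; apply/eqP => E.
have all : forall x, mul x a = mul a (mul a x).
  apply: (EQl H H9 (fun x => mul x a) (fun x => mul a (mul a x)) a b _ _ _ _ ab).
  - by move=> x y /=; rewrite (qRD H).
  - by move=> x y /=; rewrite (qLD H a x y) (qLD H a (mul a x) (mul a y)).
  - by rewrite !(qid H).
  - by rewrite E.
exact: (G3contra H H9 a).
Qed.

Lemma G1 {Q : Type} {mul : Q -> Q -> Q} : quadratical mul ->
  forall x y, x <> y -> x <> mul x (mul x y).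
Proof.
move=> H x y xy E; apply: (nL1 H x y xy); apply: (qcL H x).
by rewrite -E (qid H).
Qed.

Lemma G2 {Q : Type} {mul : Q -> Q -> Q} : quadratical mul ->
  forall x y, x <> y -> mul x y <> mul x (mul x y).
Proof. move=> H x y xy E; apply: (nL2 H x y xy); exact: (qcL H x _ _ E). Qed.

Lemma G3 {Q : Type} {mul : Q -> Q -> Q} : quadratical mul ->
  forall x y, x <> y -> mul (mul x y) x <> mul x (mul x y).
Proof.
move=> H x y xy E; rewrite (qE H) in E; apply: (ncomm H x y xy).
by symmetry; exact: (qcL H x _ _ E).
Qed.

Lemma G4 {Q : Type} {mul : Q -> Q -> Q} : quadratical mul ->
  forall x y, x <> y -> mul x (mul x y) <> mul (mul y x) x.
Proof.
move=> H x y xy E.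
have h1 := qK H x (mul x y).
have h2 := qK H x (mul y x).
rewrite -(qE H x y) -E in h2.
apply: (G3 H x y xy); apply: (qcomm H); by rewrite h1 h2.
Qed.

Lemma G5 {Q : Type} {mul : Q -> Q -> Q} : quadratical mul ->
  forall x y, x <> y -> mul x (mul x y) <> mul (mul x y) y.
Proof.
move=> H x y xy E.
have h := qRD H x y (mul x y).
rewrite (qid H) E (qY H x y) -(qLD H) in h.
apply: (ncomm H x y xy); apply: (qcL H (mul x y)).
by rewrite (qid H).
Qed.

Lemma G6 {Q : Type} {mul : Q -> Q -> Q} : quadratical mul ->
  forall x y, x <> y -> mul x (mul x y) <> mul y (mul y x).
Proof.
move=> H x y xy E.
have h1 := qK H x (mul x y).
have h2 := qK H y (mul y x).
rewrite -(qS H x y) -E h1 in h2.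
exact: xy.
Qed.

Theorem proposition4p2 (Q : finType) (mul : Q -> Q -> Q) :
  quadratical mul -> #|Q| = 9 ->
  exists a b : Q, a != b /\
    [set: Q] = [set aba mul a b] :|: H1 mul a b :|: H2 mul a b.
Proof.
move=> H H9.
have : 1 < #|Q| by rewrite H9.
case/card_gt1P => a [b [_ _ ab']].
exists a, b; split => //.
have ab : a <> b by apply/eqP.
have ba : b <> a by move=> e; apply: ab.
have HM := qmirror H.
have f1 := nL1 H _ _ ab. have f2 := nL2 H _ _ ab. have f3 := nL1 H _ _ ba.
have f4 := nL2 H _ _ ba. have f5 := ncomm H _ _ ab. have f6 := nrA H _ _ ab.
have f7 := nrB H _ _ ab. have f8 := nrP H _ _ ab. have f9 := nrQ H _ _ ab.
have g1 := G1 H _ _ ab. have g1b := G1 H _ _ ba.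
have g1c := G1 HM _ _ ab. have g1d := G1 HM _ _ ba.
have g2 := G2 H _ _ ab. have g2b := G2 H _ _ ba.
have g2c := G2 HM _ _ ab. have g2d := G2 HM _ _ ba.
have g3 := G3 H _ _ ab. have g3b := G3 H _ _ ba.
have g3c := G3 HM _ _ ab. have g3d := G3 HM _ _ ba.
have g4 := G4 H _ _ ab. have g4b := G4 H _ _ ba.
have g5 := G5 H _ _ ab. have g5b := G5 H _ _ ba.
have g6 := G6 H _ _ ab. have g6b := G6 HM _ _ ab.
have ba' : b != a by rewrite eq_sym.
have n1 := N1 H H9 _ _ ab'. have n1b := N1 H H9 _ _ ba'.
have n1c := N1 HM H9 _ _ ab'. have n1d := N1 HM H9 _ _ ba'.
have n2 := N2 H H9 _ _ ab'. have n2b := N2 H H9 _ _ ba'.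
have n2c := N2 HM H9 _ _ ab'. have n2d := N2 HM H9 _ _ ba'.
rewrite /= in g1c g1d g2c g2d g3c g3d g6b n1c n1d n2c n2d.
rewrite -(qS H a b) in g3b. rewrite -(qE H a b) in g3c. rewrite (qY H a b) in g3d.
pose l := [:: mul (mul a b) a; a; mul a b; mul b a; b; mul a (mul a b);
   mul (mul a b) b; mul (mul b a) a; mul b (mul b a)].
have U : uniq l.
  rewrite /l /= !inE !negb_or.
  neqs.
apply/esym/eqP; rewrite eqEcard subsetT cardsT H9 /=.
rewrite -[8.+1]/(size l) -(card_uniqP U); apply: subset_leq_card; apply/subsetP.
apply/allP; rewrite /= /aba /H1 /H2 !inE !eqxx ?orbT //.
Qed.
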